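(* For every Borel subset $A$ of $\mathbb N^{\mathbb N}$ there exist $g\in\mathbb N^{\mathbb N}$ and $f\in\mathbf{Stp}$ with $A=[\![g]\!]^{\mathcal B}_f$; that is, the map $\mathbb N^{\mathbb N}\times\mathbf{Stp}\to\mathcal B$, $(g,f)\mapsto[\![g]\!]^{\mathcal B}_f$, is surjective onto the family $\mathcal B$ of Borel subsets of $\mathbb N^{\mathbb N}$.
   Context: $\mathbb N=\{1,2,\dots\}$, $\mathbb N^{\mathbb N}$ with the product of discrete topologies, $\mathcal B$ its Borel sets. $B^m_n=\{f: f(n)=m\}$. Fix any bijection $\langle\cdot,\cdot\rangle:\mathbb N\times\mathbb N\to\mathbb N\setminus\{1\}$, and for a finite tuple put $\langle\,\rangle=1$ and $\langle a_1a_2\cdots a_n\rangle=\langle a_1,\langle a_2\cdots a_n\rangle\rangle$, a bijection from finite tuples onto $\mathbb N$. For $k\in\mathbb N$: $[\![k]\!]^{\mathcal S'}=\mathbb N^{\mathbb N}\setminus B^m_n$ if $k=\langle 1mn\rangle$, $=B^m_n$ if $k=\langle 2mn\rangle$, $=\emptyset$ otherwise; if $k=\langle a_1\cdots a_K\rangle$ then $[\![k]\!]^{\mathcal S'_\cap}=\bigcap_{i\le K}[\![a_i]\!]^{\mathcal S'}$ (empty intersection $=\mathbb N^{\mathbb N}$) and $[\![k]\!]^{\mathcal A}=\bigcup_{i\le K}[\![a_i]\!]^{\mathcal S'_\cap}$ (empty union $=\emptyset$). For $f\in\mathbb N^{\mathbb N}$, $n\in\mathbb N$ let $f^{[n]}(m)=f(\langle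 n,m\rangle)$. The set $\mathbf{Stp}\subseteq\mathbb N^{\mathbb N}$ of stumps is defined inductively: if $f(1)\ne1$ then $f\in\mathbf{Stp}$; if $f(1)=1$ and $f^{[n]}\in\mathbf{Stp}$ for all $n$ then $f\in\mathbf{Stp}$. For $f\in\mathbf{Stp}$ and $g\in\mathbb N^{\mathbb N}$ define recursively: if $f(1)\neq1$, $[\![g]\!]^\Pi_f=\bigcap_{n\ge2}[\![g(n)]\!]^{\mathcal A}$ and $[\![g]\!]^\Sigma_f=\bigcup_{n\ge2}[\![g(n)]\!]^{\mathcal A}$; if $f(1)=1$, $[\![g]\!]^\Pi_f=\bigcap_{n}[\![g^{[n]}]\!]^\Sigma_{f^{[n]}}$ and $[\![g]\!]^\Sigma_f=\bigcup_{n}[\![g^{[n]}]\!]^\Pi_{f^{[n]}}$. Finally $[\![g]\!]^{\mathcal B}_f=[\![g]\!]^\Pi_f$ if $g(1)=37$ and $[\![g]\!]^{\mathcal B}_f=[\![g]\!]^\Sigma_f$ if $g(1)\neq37$. *)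

(* Defs.v *)
(* N = {1,2,...} is represented by Stdlib's [positive]
   (xH = 1), so Baire space N^N is [positive -> positive]. *)
From Stdlib Require Import PArith List.
Import ListNotations.
Open Scope positive_scope.

Definition baire := positive -> positive.
Definition bset := baire -> Prop.

(* Product of discrete topologies: U is open iff every point of U has a
   basic neighbourhood (fixing finitely many coordinates) inside U. *)
Definition baire_open (U : bset) : Prop :=
  forall f, U f -> exists l : list positive,
    forall g, (forall n, In n l -> g n = f n) -> U g.

Inductive borel : bset -> Prop :=
| borel_open : forall U, baire_open U -> borel U
| borel_compl : forall A, borel A -> borel (fun x => ~ A x)
| borel_union : forall A : nat -> bset, (forall i, borel (A i)) ->
    borel (fun x => exists i, A i x).

Definition Bmn (m n : positive) : bset := fun f => f n = m.

Section Coding.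
(* [pair] is the fixed bijection N x N -> N \ {1}. *)
Variable pair : positive -> positive -> positive.

Fixpoint tup (l : list positive) : positive :=
  match l with
  | [] => 1
  | a :: l' => pair a (tup l')
  end.

Definition semS (k : positive) : bset := fun x =>
  (exists m n, k = tup [1; m; n] /\ ~ Bmn m n x) \/
  (exists m n, k = tup [2; m; n] /\ Bmn m n x).

(* [[k]]^{S'_cap}, k = <a1 ... aK> (the tuple is unique, tup being a
   bijection when pair is one) *)
Definition semScap (k : positive) : bset := fun x =>
  exists l, k = tup l /\ forall a, In a l -> semS a x.

Definition semA (k : positive) : bset := fun x =>
  exists l, k = tup l /\ exists a, In a l /\ semScap a x.

Definition sect (f : baire) (n : positive) : baire := fun m => f (pair n m).

(* Stumps, with the inductive derivation kept as data (a well-founded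
   tree) so that the recursive definitions of [[.]]^Pi, [[.]]^Sigma
   can be made by structural recursion. *)
Inductive stump : baire -> Type :=
| stump_leaf : forall f, f 1 <> 1 -> stump f
| stump_node : forall f, f 1 = 1 -> (forall n, stump (sect f n)) -> stump f.

Definition Stp (f : baire) : Prop := inhabited (stump f).

(* returns ([[g]]^Pi_f, [[g]]^Sigma_f) *)
Fixpoint semPS (f : baire) (p : stump f) (g : baire) : bset * bset :=
  match p with
  | stump_leaf _ _ =>
      (fun x => forall n, n <> 1 -> semA (g n) x,
       fun x => exists n, n <> 1 /\ semA (g n) x)
  | stump_node _ _ c =>
      (fun x => forall n, snd (semPS _ (c n) (sect g n)) x,
       fun x => exists n, fst (semPS _ (c n) (sect g n)) x)
  end.

Definition semB (f : baire) (p : stump f) (g : baire) : bset :=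
  if Pos.eqb (g 1) 37 then fst (semPS f p g) else snd (semPS f p g).

End Coding.

(* Main.v *)
Require Import Defs.
From Stdlib Require Import PArith List Arith.
From Stdlib Require Import Classical ClassicalEpsilon FunctionalExtensionality Lia.
Import ListNotations.
Open Scope positive_scope.

Section Proof.
Variable pair : positive -> positive -> positive.
Hypothesis pair_ne1 : forall a b, pair a b <> 1.
Hypothesis pair_inj : forall a b c d, pair a b = pair c d -> a = c /\ b = d.
Hypothesis pair_surj : forall k, k <> 1 -> exists a b, pair a b = k.

Lemma tup_inj : forall l1 l2, tup pair l1 = tup pair l2 -> l1 = l2.
Proof.
  induction l1 as [|a l1 IH]; destruct l2 as [|b l2]; simpl; intro e; auto.
  - exfalso; apply (pair_ne1 b (tup pair l2)); auto.
  - exfalso; apply (pair_ne1 a (tup pair l1)); auto.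
  - apply pair_inj in e; destruct e as [e1 e2]; subst; f_equal; auto.
Qed.

Lemma semS1 m n x : semS pair (tup pair [1;m;n]) x <-> x n <> m.
Proof.
  unfold semS, Bmn; split.
  - intros [[m' [n' [e h]]]|[m' [n' [e h]]]]; apply tup_inj in e; inversion e; subst; auto.
  - intro h; left; eauto.
Qed.

Lemma semS2 m n x : semS pair (tup pair [2;m;n]) x <-> x n = m.
Proof.
  unfold semS, Bmn; split.
  - intros [[m' [n' [e h]]]|[m' [n' [e h]]]]; apply tup_inj in e; inversion e; subst; auto.
  - intro h; right; eauto.
Qed.

Lemma semScap_tup l x : semScap pair (tup pair l) x <-> forall a, In a l -> semS pair a x.
Proof.
  unfold semScap; split.
  - intros [l' [e h]]; apply tup_inj in e; subst; auto.
  - intro h; eauto.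
Qed.

Lemma semA_tup l x : semA pair (tup pair l) x <-> exists a, In a l /\ semScap pair a x.
Proof.
  unfold semA; split.
  - intros [l' [e h]]; apply tup_inj in e; subst; auto.
  - intro h; eauto.
Qed.

Definition ACoded (S : bset) := exists k, forall x, S x <-> semA pair k x.

Lemma AC_ext (S S' : bset) : (forall x, S x <-> S' x) -> ACoded S -> ACoded S'.
Proof. intros h [k hk]; exists k; intro x; rewrite <- h; auto. Qed.

Lemma AC_empty : ACoded (fun _ => False).
Proof.
  exists (tup pair []); intro x; rewrite semA_tup; split; [tauto|].
  intros [a [[] _]].
Qed.

Lemma AC_full : ACoded (fun _ => True).
Proof.
  exists (tup pair [tup pair []]); intro x; rewrite semA_tup; split; [|tauto].
  intros _; exists (tup pair []); split; [left; auto|].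
  rewrite semScap_tup; intros a [].
Qed.

Lemma AC_scap k : ACoded (semScap pair k).
Proof.
  exists (tup pair [k]); intro x; rewrite semA_tup; split.
  - intro h; exists k; split; [left|]; auto.
  - intros [a [[e|[]] h]]; subst; auto.
Qed.

Lemma negS a : exists c, forall x, ~ semS pair a x <-> semScap pair c x.
Proof.
  destruct (classic (exists m n, a = tup pair [1;m;n])) as [[m [n e]]|h1].
  { subst; exists (tup pair [tup pair [2;m;n]]); intro x.
    rewrite semScap_tup, semS1; split.
    - intros h b [e|[]]; subst; rewrite semS2; apply NNPP; auto.
    - intros h; specialize (h _ (or_introl eq_refl)); rewrite semS2 in h; tauto. }
  destruct (classic (exists m n, a = tup pair [2;m;n])) as [[m [n e]]|h2].
  { subst; exists (tup pair [tup pair [1;m;n]]); intro x.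
    rewrite semScap_tup, semS2; split.
    - intros h b [e|[]]; subst; rewrite semS1; auto.
    - intros h; specialize (h _ (or_introl eq_refl)); rewrite semS1 in h; tauto. }
  exists (tup pair []); intro x; rewrite semScap_tup; split.
  - intros _ b [].
  - intros _ h; unfold semS in h.
    destruct h as [[m [n [e _]]]|[m [n [e _]]]]; eauto.
Qed.

Lemma negScap a : ACoded (fun x => ~ semScap pair a x).
Proof.
  destruct (classic (exists l, a = tup pair l)) as [[l e]|hn].
  - subst.
    assert (X : forall b, {c | forall x, ~ semS pair b x <-> semScap pair c x}).
    { intro b; apply constructive_indefinite_description; apply negS. }
    exists (tup pair (map (fun b => proj1_sig (X b)) l)); intro x.
    rewrite semA_tup, semScap_tup; split.
    + intro h; apply not_all_ex_not in h; destruct h as [b hb].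
      apply imply_to_and in hb; destruct hb as [hin hb].
      exists (proj1_sig (X b)); split; [apply (in_map (fun b => proj1_sig (X b))); auto|].
      apply (proj2_sig (X b)); auto.
    + intros [c [hc h]] hall; apply in_map_iff in hc; destruct hc as [b [e hb]]; subst.
      apply (proj2_sig (X b)) in h; apply h; auto.
  - apply (AC_ext (fun _ => True)); [|apply AC_full].
    intro x; split; auto; intros _ [l [e _]]; eauto.
Qed.

Definition PiA (S : bset) := exists T : positive -> bset,
  (forall n, ACoded (T n)) /\ forall x, S x <-> forall n, T n x.
Definition SigA (S : bset) := exists T : positive -> bset,
  (forall n, ACoded (T n)) /\ forall x, S x <-> exists n, T n x.

Lemma negA k : PiA (fun x => ~ semA pair k x).
Proof.
  destruct (classic (exists l, k = tup pair l)) as [[l e]|hn].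
  - subst.
    exists (fun n x => match nth_error l (Pos.to_nat n - 1) with
                       | Some a => ~ semScap pair a x | None => True end).
    split.
    + intro n; destruct (nth_error l (Pos.to_nat n - 1)); [apply negScap|apply AC_full].
    + intro x; rewrite semA_tup; split.
      * intros h n; destruct (nth_error l (Pos.to_nat n - 1)) eqn:E; auto.
        intro hs; apply h; exists p; split; auto; eapply nth_error_In; eauto.
      * intros h [a [ha hs]]; apply In_nth_error in ha; destruct ha as [i hi].
        specialize (h (Pos.of_succ_nat i)); rewrite SuccNat2Pos.id_succ in h.
        simpl in h; rewrite Nat.sub_0_r, hi in h; auto.
  - exists (fun _ _ => True); split; [intro; apply AC_full|].
    intro x; split; auto; intros _ [l [e _]]; eauto.
Qed.

Definition PiRep (S : bset) := exists f (p : stump pair f) g,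
  forall x, S x <-> fst (semPS pair f p g) x.
Definition SigRep (S : bset) := exists f (p : stump pair f) g,
  forall x, S x <-> snd (semPS pair f p g) x.

Lemma PiRep_ext S S' : (forall x, S x <-> S' x) -> PiRep S -> PiRep S'.
Proof. intros h [f [p [g hg]]]; exists f, p, g; intro x; rewrite <- h; auto. Qed.
Lemma SigRep_ext S S' : (forall x, S x <-> S' x) -> SigRep S -> SigRep S'.
Proof. intros h [f [p [g hg]]]; exists f, p, g; intro x; rewrite <- h; auto. Qed.

Lemma unpair_ex : exists u : positive -> positive * positive,
  forall a b, u (pair a b) = (a, b).
Proof.
  assert (H : forall k, exists ab : positive * positive,
             k <> 1 -> pair (fst ab) (snd ab) = k).
  { intro k; destruct (Pos.eq_dec k 1) as [e|ne].
    - exists (1,1); intro; contradiction.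
    - destruct (pair_surj k ne) as [a [b e]]; exists (a,b); auto. }
  exists (fun k => proj1_sig (constructive_indefinite_description _ (H k))).
  intros a b.
  destruct (constructive_indefinite_description _ (H (pair a b))) as [[a' b'] h]; simpl.
  specialize (h (pair_ne1 a b)); simpl in h; apply pair_inj in h.
  destruct h; subst; auto.
Qed.

Definition unpair := proj1_sig (constructive_indefinite_description _ unpair_ex).
Lemma unpair_pair a b : unpair (pair a b) = (a, b).
Proof. unfold unpair; apply (proj2_sig (constructive_indefinite_description _ unpair_ex)). Qed.

Definition comb (v : positive) (F : positive -> baire) : baire :=
  fun k => if Pos.eqb k 1 then v else F (fst (unpair k)) (snd (unpair k)).

Lemma sect_comb v F n : sect pair (comb v F) n = F n.
Proof.
  apply functional_extensionality; intro m; unfold sect, comb.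
  destruct (Pos.eqb_spec (pair n m) 1) as [e|_]; [exfalso; eapply pair_ne1; eauto|].
  rewrite unpair_pair; reflexivity.
Qed.

Definition tr {f1 f0 : baire} (e : f1 = f0) (p : stump pair f0) : stump pair f1 :=
  eq_rect_r (stump pair) p e.

Lemma semPS_tr f1 f0 (e : f1 = f0) p g : semPS pair f1 (tr e p) g = semPS pair f0 p g.
Proof. subst; reflexivity. Qed.

Lemma getRep (S : bset) (b : bool) :
  (exists f (p : stump pair f) g, forall x, S x <-> (if b then fst else snd) (semPS pair f p g) x) ->
  {f : baire & {p : stump pair f & {g : baire |
     forall x, S x <-> (if b then fst else snd) (semPS pair f p g) x}}}.
Proof.
  intro H; destruct (constructive_indefinite_description _ H) as [f Hf].
  destruct (constructive_indefinite_description _ Hf) as [p Hp].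
  destruct (constructive_indefinite_description _ Hp) as [g Hg].
  exact (existT _ f (existT _ p (exist _ g Hg))).
Qed.

Lemma union_rep (S : positive -> bset) :
  (forall n, PiRep (S n)) -> SigRep (fun x => exists n, S n x).
Proof.
  intro H.
  pose (X := fun n => getRep (S n) true (H n)).
  pose (F := fun n => projT1 (X n)).
  pose (P := fun n => projT1 (projT2 (X n)) : stump pair (F n)).
  pose (G := fun n => proj1_sig (projT2 (projT2 (X n)))).
  assert (hs : forall n x, S n x <-> fst (semPS pair (F n) (P n) (G n)) x).
  { intro n; exact (proj2_sig (projT2 (projT2 (X n)))). }
  assert (hf : comb 1 F 1 = 1) by reflexivity.
  exists (comb 1 F), (stump_node pair (comb 1 F) hf (fun n => tr (sect_comb 1 F n) (P n))),
    (comb 1 G).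
  intro x; simpl; split; intros [n h]; exists n.
  - rewrite (sect_comb 1 G n), semPS_tr; exact (proj1 (hs n x) h).
  - rewrite (sect_comb 1 G n), semPS_tr in h; exact (proj2 (hs n x) h).
Qed.

Lemma inter_rep (S : positive -> bset) :
  (forall n, SigRep (S n)) -> PiRep (fun x => forall n, S n x).
Proof.
  intro H.
  pose (X := fun n => getRep (S n) false (H n)).
  pose (F := fun n => projT1 (X n)).
  pose (P := fun n => projT1 (projT2 (X n)) : stump pair (F n)).
  pose (G := fun n => proj1_sig (projT2 (projT2 (X n)))).
  assert (hs : forall n x, S n x <-> snd (semPS pair (F n) (P n) (G n)) x).
  { intro n; exact (proj2_sig (projT2 (projT2 (X n)))). }
  assert (hf : comb 1 F 1 = 1) by reflexivity.
  exists (comb 1 F), (stump_node pair (comb 1 F) hf (fun n => tr (sect_comb 1 F n) (P n))),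
    (comb 1 G).
  intro x; simpl; split; intros h n; specialize (h n).
  - rewrite (sect_comb 1 G n), semPS_tr; exact (proj1 (hs n x) h).
  - rewrite (sect_comb 1 G n), semPS_tr in h; exact (proj2 (hs n x) h).
Qed.

Lemma Pi_to_Sig S : PiRep S -> SigRep S.
Proof.
  intro h; apply (SigRep_ext (fun x => exists n : positive, S x)).
  - intro x; split; [intros [_ y]; auto | intro y; exists 1; auto].
  - apply union_rep; auto.
Qed.

Lemma Sig_to_Pi S : SigRep S -> PiRep S.
Proof.
  intro h; apply (PiRep_ext (fun x => forall n : positive, S x)).
  - intro x; split; [intro y; apply (y 1) | auto].
  - apply inter_rep; auto.
Qed.

Lemma leafPi S : PiA S -> PiRep S.
Proof.
  intros [T [hT hS]].
  assert (X : forall n, {k | forall x, T n x <-> semA pair k x}).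
  { intro n; apply constructive_indefinite_description; apply hT. }
  assert (hf : (fun _ : positive => 2) 1 <> 1) by discriminate.
  exists (fun _ => 2), (stump_leaf pair _ hf), (fun n => proj1_sig (X (Pos.pred n))).
  intro x; rewrite hS; simpl; split.
  - intros h n _; apply (proj2_sig (X (Pos.pred n))); auto.
  - intros h n; specialize (h (Pos.succ n) (Pos.succ_not_1 n)).
    rewrite Pos.pred_succ in h; apply (proj2_sig (X n)); auto.
Qed.

Lemma leafSig S : SigA S -> SigRep S.
Proof.
  intros [T [hT hS]].
  assert (X : forall n, {k | forall x, T n x <-> semA pair k x}).
  { intro n; apply constructive_indefinite_description; apply hT. }
  assert (hf : (fun _ : positive => 2) 1 <> 1) by discriminate.
  exists (fun _ => 2), (stump_leaf pair _ hf), (fun n => proj1_sig (X (Pos.pred n))).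
  intro x; rewrite hS; simpl; split.
  - intros [n h]; exists (Pos.succ n); split; [apply Pos.succ_not_1|].
    rewrite Pos.pred_succ; apply (proj2_sig (X n)); auto.
  - intros [n [_ h]]; exists (Pos.pred n); apply (proj2_sig (X (Pos.pred n))); auto.
Qed.

Lemma PiRep_empty : PiRep (fun _ => False).
Proof.
  apply leafPi; exists (fun _ _ => False); split; [intro; apply AC_empty|].
  intro x; split; [tauto| intro h; apply (h 1)].
Qed.

Lemma PiRep_full : PiRep (fun _ => True).
Proof.
  apply leafPi; exists (fun _ _ => True); split; [intro; apply AC_full|].
  intro x; split; auto.
Qed.

Lemma compl : forall f (p : stump pair f) g,
  SigRep (fun x => ~ fst (semPS pair f p g) x) /\
  PiRep (fun x => ~ snd (semPS pair f p g) x).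
Proof.
  induction p as [f hf|f hf c IH]; intro g; simpl; split.
  - apply (SigRep_ext (fun x => exists n, n <> 1 /\ ~ semA pair (g n) x)).
    { intro x; split.
      - intros [n [hn h]] h'; apply h; auto.
      - intro h; apply not_all_ex_not in h; destruct h as [n h].
        apply imply_to_and in h; eauto. }
    apply union_rep; intro n; destruct (Pos.eq_dec n 1) as [e|ne].
    + apply (PiRep_ext (fun _ => False)); [|apply PiRep_empty].
      intro x; split; [tauto|]; intros [h _]; contradiction.
    + apply (PiRep_ext (fun x => ~ semA pair (g n) x)); [|apply leafPi, negA].
      intro x; tauto.
  - apply (PiRep_ext (fun x => forall n, n <> 1 -> ~ semA pair (g n) x)).
    { intro x; split.
      - intros h [n [hn h']]; apply (h n); auto.
      - intros h n hn h'; apply h; eauto. }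
    apply inter_rep; intro n; apply Pi_to_Sig; destruct (Pos.eq_dec n 1) as [e|ne].
    + apply (PiRep_ext (fun _ => True)); [|apply PiRep_full].
      intro x; split; auto; intros _ hn; contradiction.
    + apply (PiRep_ext (fun x => ~ semA pair (g n) x)); [|apply leafPi, negA].
      intro x; split; auto.
  - apply (SigRep_ext (fun x => exists n, ~ snd (semPS pair _ (c n) (sect pair g n)) x)).
    { intro x; split.
      - intros [n h] h'; apply h; auto.
      - intro h; apply not_all_ex_not in h; auto. }
    apply union_rep; intro n; apply (proj2 (IH n _)).
  - apply (PiRep_ext (fun x => forall n, ~ fst (semPS pair _ (c n) (sect pair g n)) x)).
    { intro x; split.
      - intros h [n h']; apply (h n); auto.
      - intros h n h'; apply h; eauto. }
    apply inter_rep; intro n; apply (proj1 (IH n _)).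
Qed.

Lemma open_rep U : baire_open U -> SigRep U.
Proof.
  intro hU; apply leafSig.
  exists (fun k x => (forall y, semScap pair k y -> U y) /\ semScap pair k x); split.
  - intro k; destruct (classic (forall y, semScap pair k y -> U y)) as [h|h].
    + apply (AC_ext (semScap pair k)); [|apply AC_scap]; intro x; tauto.
    + apply (AC_ext (fun _ => False)); [|apply AC_empty]; intro x; tauto.
  - intro x; split.
    + intro hx; destruct (hU x hx) as [l hl].
      exists (tup pair (map (fun i => tup pair [2; x i; i]) l)); split.
      * intros y hy; apply hl; intros n hn; rewrite semScap_tup in hy.
        specialize (hy (tup pair [2; x n; n])); rewrite semS2 in hy.
        apply hy; apply in_map_iff; eauto.
      * rewrite semScap_tup; intros a ha; apply in_map_iff in ha.
        destruct ha as [i [e _]]; subst; rewrite semS2; auto.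
    + intros [k [h1 h2]]; auto.
Qed.

Lemma borel_rep A : borel A -> SigRep A.
Proof.
  induction 1 as [U hU|A hA IH|A hA IH].
  - apply open_rep; auto.
  - destruct IH as [f [p [g hg]]].
    apply Pi_to_Sig; apply (PiRep_ext (fun x => ~ snd (semPS pair f p g) x)).
    + intro x; rewrite hg; tauto.
    + apply (proj2 (compl f p g)).
  - apply (SigRep_ext (fun x => exists n, A (Pos.to_nat n - 1)%nat x)).
    + intro x; split.
      * intros [n h]; eauto.
      * intros [i h]; exists (Pos.of_succ_nat i); rewrite SuccNat2Pos.id_succ.
        simpl; rewrite Nat.sub_0_r; auto.
    + apply union_rep; intro n; apply Sig_to_Pi; auto.
Qed.

Lemma semPS_ext : forall f (p : stump pair f) g g',
  (forall k, k <> 1 -> g k = g' k) ->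
  forall x, (fst (semPS pair f p g) x <-> fst (semPS pair f p g') x) /\
            (snd (semPS pair f p g) x <-> snd (semPS pair f p g') x).
Proof.
  induction p as [f hf|f hf c IH]; intros g g' H x; simpl.
  - split; split.
    + intros h n hn; rewrite <- (H n hn); auto.
    + intros h n hn; rewrite (H n hn); auto.
    + intros [n [hn h]]; exists n; rewrite <- (H n hn); auto.
    + intros [n [hn h]]; exists n; rewrite (H n hn); auto.
  - assert (E : forall n, forall k, k <> 1 -> sect pair g n k = sect pair g' n k).
    { intros n k _; unfold sect; apply H; apply pair_ne1. }
    split; split.
    + intros h n; apply (IH n _ _ (E n) x); auto.
    + intros h n; apply (IH n _ _ (E n) x); auto.
    + intros [n h]; exists n; apply (IH n _ _ (E n) x); auto.
    + intros [n h]; exists n; apply (IH n _ _ (E n) x); auto.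
Qed.

End Proof.

Theorem proposition5p19
  (pair : positive -> positive -> positive)
  (pair_ne1 : forall a b, pair a b <> 1)
  (pair_inj : forall a b c d, pair a b = pair c d -> a = c /\ b = d)
  (pair_surj : forall k, k <> 1 -> exists a b, pair a b = k)
  (A : bset) (hA : borel A) :
  exists (g f : baire) (p : stump pair f),
    forall x, A x <-> semB pair f p g x.
Proof.
  destruct (borel_rep pair pair_ne1 pair_inj pair_surj A hA) as [f [p [g hg]]].
  exists (fun k => if Pos.eqb k 1 then 1 else g k), f, p.
  intro x; unfold semB; simpl; rewrite hg.
  apply (semPS_ext pair pair_ne1 f p g).
  intros k hk; destruct k; [reflexivity|reflexivity|contradiction].
Qed.
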